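(* Let $\mathbb{A}$ be a medial algebra over a field $\mathbb{K}$ of characteristic not $2,3$, and let $c$ be a nonzero idempotent of $\mathbb{A}$. Then: (a) $L_c(xy)=L_c(x)L_c(y)$ for all $x,y\in\mathbb{A}$, i.e. $L_c$ is an algebra endomorphism; (b) $\mathbb{A}_c(0)=\ker L_c$ is an ideal of $\mathbb{A}$; (c) $L_c(\mathbb{A})$ is a subalgebra of $\mathbb{A}$; (d) $\mathbb{A}_c(1)=\{x: cx=x\}$ is a subalgebra of $L_c(\mathbb{A})$ and $\dim\mathbb{A}_c(1)\ge 1$; (e) for any nonzero idempotents $c_1,c_2$ of $\mathbb{A}$, $L_{c_2}L_{c_1}=L_{c_2c_1}L_{c_2}$.
   Context: All algebras are commutative, possibly nonassociative, finite-dimensional. Medial: $(xy)(zw)=(xz)(yw)$ for all $x,y,z,w\in\mathbb{A}$. $L_y:x\mapsto yx$. $\mathbb{A}_c(\lambda)$ denotes the $\lambda$-eigenspace of $L_c$. *)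

(* Defs.v *)
From HB Require Import structures.
From mathcomp Require Import all_boot all_order all_algebra.
Set Implicit Arguments. Unset Strict Implicit. Unset Printing Implicit Defensive.
Import GRing.Theory.
Local Open Scope ring_scope.

(* A commutative, possibly nonassociative, finite-dimensional algebra over a
   field K is modelled as a finite-dimensional K-vector space V (vectType)
   together with a bilinear product  mul : {bilinear V -> V -> V}. *)

Definition commutative_mul (K : fieldType) (V : vectType K)
  (mul : V -> V -> V) := forall x y, mul x y = mul y x.

Definition medial (K : fieldType) (V : vectType K) (mul : V -> V -> V) :=
  forall x y z w, mul (mul x y) (mul z w) = mul (mul x z) (mul y w).

Definition Lmul (K : fieldType) (V : vectType K)
  (mul : {bilinear V -> V -> V}) (y : V) : 'End(V) := linfun (mul y).

Definition eigsp (K : fieldType) (V : vectType K)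
  (mul : {bilinear V -> V -> V}) (c : V) (lam : K) : {vspace V} :=
  lker (Lmul mul c - lam *: \1%VF).

(* an ideal: a subspace U with A U contained in U (commutativity makes
   left and right ideals coincide) *)
Definition is_ideal (K : fieldType) (V : vectType K) (mul : V -> V -> V)
  (U : {vspace V}) := forall a x, x \in U -> mul a x \in U.

Definition is_subalgebra (K : fieldType) (V : vectType K) (mul : V -> V -> V)
  (U : {vspace V}) := forall x y, x \in U -> y \in U -> mul x y \in U.

Definition nonzero_idempotent (K : fieldType) (V : vectType K)
  (mul : V -> V -> V) (c : V) := c != 0 /\ mul c c = c.

(* Main.v *)
Require Import Defs.
From HB Require Import structures.
From mathcomp Require Import all_boot all_order all_algebra.
Import GRing.Theory.
Local Open Scope ring_scope.

Theorem proposition3p5 (K : fieldType) (V : vectType K)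
  (mul : {bilinear V -> V -> V})
  (hcomm : commutative_mul mul) (hmed : medial mul)
  (hchar2 : (2%:R : K) != 0) (hchar3 : (3%:R : K) != 0)
  (c : V) (hc : nonzero_idempotent mul c) :
  (* (a) L_c is an algebra endomorphism *)
  (forall x y, Lmul mul c (mul x y) = mul (Lmul mul c x) (Lmul mul c y))
  (* (b) A_c(0) = ker L_c is an ideal *)
  /\ (eigsp mul c 0 = lker (Lmul mul c) /\ is_ideal mul (eigsp mul c 0))
  (* (c) L_c(A) is a subalgebra *)
  /\ is_subalgebra mul (limg (Lmul mul c))
  (* (d) A_c(1) is a subalgebra of L_c(A), of dimension >= 1 *)
  /\ ((eigsp mul c 1 <= limg (Lmul mul c))%VS
      /\ is_subalgebra mul (eigsp mul c 1)
      /\ (1 <= \dim (eigsp mul c 1))%N)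
  (* (e) L_{c2} L_{c1} = L_{c2 c1} L_{c2} for nonzero idempotents c1, c2 *)
  /\ (forall c1 c2 : V, nonzero_idempotent mul c1 -> nonzero_idempotent mul c2 ->
        (Lmul mul c2 \o Lmul mul c1)%VF = (Lmul mul (mul c2 c1) \o Lmul mul c2)%VF).
Proof.
case: hc => hc0 hcc.
have LE : forall y x, Lmul mul y x = mul y x by move=> y x; rewrite /Lmul lfunE.
have Ha : forall x y, Lmul mul c (mul x y) = mul (Lmul mul c x) (Lmul mul c y).
  by move=> x y; rewrite !LE -{1}hcc hmed.
have E0 : eigsp mul c 0 = lker (Lmul mul c).
  by rewrite /eigsp scale0r subr0.
have E1 : forall x, (x \in eigsp mul c 1) = (mul c x == x).
  move=> x; rewrite /eigsp memv_ker add_lfunE opp_lfunE scale_lfunE id_lfunE.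
  by rewrite scale1r LE subr_eq0.
have Img : forall x, mul c x = x -> x \in limg (Lmul mul c).
  by move=> x hx; rewrite -hx -LE memv_img ?memvf.
split; first exact: Ha.
split.
  split; first exact: E0.
  move=> a x; rewrite E0 !memv_ker !LE => /eqP hx.
  by rewrite -{1}hcc hmed hx linear0r.
split.
  move=> x y /memv_imgP [u _ ->] /memv_imgP [v _ ->].
  by rewrite -Ha memv_img ?memvf.
split.
  split.
    apply/subvP => x; rewrite E1 => /eqP; exact: Img.
  split.
    move=> x y; rewrite !E1 => /eqP hx /eqP hy.
    by rewrite -{1}hcc hmed hx hy.
  have : (<[c]> <= eigsp mul c 1)%VS by rewrite -memvE E1 hcc.
  by move/dimvS; rewrite dim_vline hc0.
move=> c1 c2 _ [_ h2]; apply/lfunP => x.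
by rewrite !comp_lfunE !LE -{1}h2 hmed.
Qed.
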